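(* Let $p\geq 5$ be a prime, $L/\mathbb{Q}_p$ a finite extension with ring of integers $\mathcal{O}_L$, $k\geq 2$ an even integer, $e_0\in L$, and $\Lambda_{(k,r_0)}:=\mathcal{O}_L\left[\left[\frac{X-k}{e_0}\right]\right]$. Let $B^\circ(r_0)_{\rm cl}$ be the (infinite) set of classical weights of the Coleman family described in the context, and for each $\kappa\in B^\circ(r_0)_{\rm cl}$ let $P_\kappa\in\Lambda_{(k,r_0)}$ be a generator of the kernel of the evaluation map $\pi_\kappa:\Lambda_{(k,r_0)}\to\mathcal{O}_L$, $X\mapsto\kappa$, and put $(P_\kappa):=\Lambda_{(k,r_0)}[1/p]\cdot P_\kappa$. Let $h=v(\lambda)\geq 0$. Then $$\bigcap_{\kappa\in B^\circ(r_0)_{\rm cl}}\,(P_\kappa)\,\widehat{\otimes}_{\mathbb{Q}_p}\,\mathcal{H}_{v(\lambda)}(\widetilde{\Gamma}_{\rm ac})_L=0,$$ the intersection being taken inside $\Lambda_{(k,r_0)}[1/p]\,\widehat{\otimes}_{\mathbb{Q}_p}\,\mathcal{H}_{v(\lambda)}(\widetilde{\Gamma}_{\rm ac})_L$.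
   Context: Let $K$ be an imaginary quadratic field in which $p$ splits, $K_{p^\infty}$ its ring class field of conductor $p^\infty$ and $\widetilde{\Gamma}_{\rm ac}=\mathrm{Gal}(K_{p^\infty}/K)=\Gamma_{\rm ac}\times\Delta_{\rm ac}$ with $\Gamma_{\rm ac}\cong\mathbb{Z}_p$ and $\Delta_{\rm ac}$ finite; fix a topological generator $\gamma_{\rm ac}$ of $\Gamma_{\rm ac}$. For real $h\geq 0$ define on $\mathbb{Q}_p[[X]]$ the valuation $v_h(\sum_n c_nX^n)=\inf_n\{\mathrm{ord}_p(c_n)+h\ell(n)\}$ where $\ell(0)=0$ and $\ell(n)=\frac{\log n}{\log p}+1$ for $n\geq1$; let $\mathcal{H}_h=\{F: v_h(F)>-\infty\}$. Substituting $X=\gamma_{\rm ac}-1$ gives $\mathcal{H}_h(\Gamma_{\rm ac})$; set $\mathcal{H}_h(\widetilde{\Gamma}_{\rm ac}):=\mathcal{H}_h(\Gamma_{\rm ac})\otimes_{\Lambda(\Gamma_{\rm ac})}\mathbb{Z}_p[[\widetilde{\Gamma}_{\rm ac}]]$ and $\mathcal{H}_h(\widetilde{\Gamma}_{\rm ac})_L:=\mathcal{H}_h(\widetilde{\Gamma}_{\rm ac})\otimes_{\mathbb{Z}_p}L$. The ring $\Lambda_{(k,r_0)}$ is the ring of functions bounded by $1$ on an open disc in weight space about $k$ (with $r_0=p^{\mathrm{ord}_p(e_0)}<p^{(p-1)/(p-2)}$). A Coleman family $\mathbf{f}$ of constant slope $v(\lambda)$ is given over this disc, and $B^\circ(r_0)_{\rm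 cl}$ denotes its set of classical points: an infinite set of integers $\kappa$ with $|\kappa-k|_p<|e_0|_p$ at which $\mathbf{f}$ specializes to a classical eigenform of weight $\kappa$. *)

(* Defs.v *)
From HB Require Import structures.
From mathcomp Require Import all_boot all_order all_algebra.
From mathcomp Require Import all_classical all_reals all_analysis.
Set Implicit Arguments. Unset Strict Implicit. Unset Printing Implicit Defensive.
Import Order.TTheory GRing.Theory Num.Theory.
Local Open Scope ring_scope.

Section Defs.
Variables (R : realType) (L : fieldType) (ord : L -> \bar R).

(* ord is a discrete, complete, non-archimedean valuation on L, normalized by
   ord p = 1, with finite residue field: this characterizes the finite
   extensions L of Q_p together with their valuation ord_p. *)
Definition cauchy_ord (u : nat -> L) : Prop :=
  forall N : R, exists M : nat, forall i j : nat, (M <= i)%N -> (M <= j)%N ->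
    (N%:E <= ord (u i - u j))%E.

Definition cvg_ord (u : nat -> L) (l : L) : Prop :=
  forall N : R, exists M : nat, forall i : nat, (M <= i)%N ->
    (N%:E <= ord (u i - l))%E.

Definition finite_ext_Qp (p : nat) : Prop :=
  [/\ (forall x : L, ord x = +oo%E <-> x = 0),
      (forall x y : L, ord (x * y) = (ord x + ord y)%E),
      (forall x y : L, (Order.min (ord x) (ord y) <= ord (x + y))%E) &
      ord (p%:R) = 1%:E] /\ [/\
      (exists e : nat, (0 < e)%N /\ forall x : L, x != 0 ->
          exists z : int, ord x = (z%:~R / e%:R)%:E),
      (forall u : nat -> L, cauchy_ord u -> exists l : L, cvg_ord u l) &
      (exists s : seq L, (forall r, r \in s -> (0 <= ord r)%E) /\
          forall x : L, (0 <= ord x)%E -> exists2 r, r \in s & (0 < ord (x - r))%E)].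

(* Power series in Y := (X - k)/e0 are coefficient sequences nat -> L. *)
Definition in_Lambda (a : nat -> L) : Prop := forall m, (0 <= ord (a m))%E.

Definition mul_ser (a b : nat -> L) : nat -> L :=
  fun m => \sum_(i < m.+1) a i * b (m - i)%N.

Definition evals_to (a : nat -> L) (y s : L) : Prop :=
  cvg_ord (fun N => \sum_(m < N) a m * y ^+ m) s.

(* the specialization pi_kappa : Lambda -> O_L, X |-> kappa, i.e.
   Y |-> (kappa - k)/e0 *)
Definition y_of (k : nat) (e0 : L) (kappa : int) : L :=
  (kappa - k%:Z)%:~R / e0.

Definition gen_ker_pi (k : nat) (e0 : L) (kappa : int) (P : nat -> L) : Prop :=
  in_Lambda P /\
  forall a, in_Lambda a ->
    (evals_to a (y_of k e0 kappa) 0 <-> exists2 b, in_Lambda b & a = mul_ser P b).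

Definition ell (p n : nat) : R :=
  if n == 0%N then 0 else ln (n%:R) / ln (p%:R) + 1.

(* Elements of Lambda[1/p] \hat\otimes H_h(~Gamma_ac)_L, with
   ~Gamma_ac = Gamma_ac x Delta and X = gamma_ac - 1: families, indexed by
   delta in Delta, of two-variable series sum_{m,n} c(delta,m,n) Y^m X^n
   with inf (ord c(delta,m,n) + h * l(n)) > -oo. *)
Definition tens_elt (D : finType) := D -> nat -> nat -> L.

Definition in_tens (D : finType) (p : nat) (h : R) (F : tens_elt D) : Prop :=
  exists C : R, forall (d : D) (m n : nat),
    (C%:E <= ord (F d m n) + (h * ell p n)%:E)%E.

Definition mulY (D : finType) (P : nat -> L) (G : tens_elt D) : tens_elt D :=
  fun d m n => \sum_(i < m.+1) P i * G d (m - i)%N n.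

End Defs.

(* Main.v *)
Require Import Defs.
From HB Require Import structures.
From mathcomp Require Import all_boot all_order all_algebra.
From mathcomp Require Import all_classical all_reals all_analysis.
Import Order.TTheory GRing.Theory Num.Theory.
From mathcomp Require Import lra zify.
Local Open Scope ring_scope.

Lemma exnat (R : realType) (x : R) : exists n : nat, x < n%:R.
Proof.
exists (Num.Def.archi_bound `|x|).
exact: le_lt_trans (ler_norm x) (archi_boundP (normr_ge0 x)).
Qed.

Section Val.
Variables (R : realType) (L : fieldType) (ord : L -> \bar R) (p : nat).
Hypothesis V0 : forall x : L, ord x = +oo%E <-> x = 0.
Hypothesis VM : forall x y : L, ord (x * y) = (ord x + ord y)%E.
Hypothesis VA : forall x y : L, (Order.min (ord x) (ord y) <= ord (x + y))%E.
Hypothesis Vp : ord (p%:R) = 1%:E.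


Lemma ord0 : ord 0 = +oo%E. Proof. by apply/V0. Qed.

Lemma ord_ninfty x : ord x != -oo%E.
Proof.
apply/eqP => hx; have := VM x 0; rewrite mulr0 ord0 hx /=.
by [].
Qed.

Lemma ord_fin x : x != 0 -> exists r : R, ord x = r%:E.
Proof.
move=> x0; case hx: (ord x) => [r| |]; first by exists r.
- by move/V0: hx => /eqP; rewrite (negbTE x0).
- by move: (ord_ninfty x); rewrite hx.
Qed.

Lemma ord1 : ord 1 = 0%E.
Proof.
have [r hr] := ord_fin 1 (oner_neq0 L).
have := VM 1 1; rewrite mulr1 hr -EFinD => -[] /eqP.
by rewrite -subr_eq0 opprD addrA subrr sub0r oppr_eq0 => /eqP ->.
Qed.

Lemma ordN1 : ord (-1) = 0%E.
Proof.
have n1 : (-1 : L) != 0 by rewrite oppr_eq0 oner_eq0.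
have [r hr] := ord_fin (-1) n1.
have := VM (-1) (-1); rewrite mulrNN mulr1 ord1 hr -EFinD => -[] /eqP.
rewrite eq_sym -(mulr2n r) -mulr_natr mulf_eq0 pnatr_eq0 orbF => /eqP ->.
by [].
Qed.

Lemma ordN x : ord (- x) = ord x.
Proof. by rewrite -mulN1r VM ordN1 add0e. Qed.

Lemma ord_add_ge (c : \bar R) x y : (c <= ord x)%E -> (c <= ord y)%E -> (c <= ord (x + y))%E.
Proof.
move=> hx hy; apply: le_trans (VA x y); by rewrite le_min hx hy.
Qed.

Lemma ord_add_gt (c : \bar R) x y : (c < ord x)%E -> (c < ord y)%E -> (c < ord (x + y))%E.
Proof.
move=> hx hy; apply: lt_le_trans (VA x y); by rewrite lt_min hx hy.
Qed.

Lemma ord_sum_ge (I : Type) (r : seq I) (P : pred I) (F : I -> L) (c : \bar R) :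
  (forall i, P i -> (c <= ord (F i))%E) -> (c <= ord (\sum_(i <- r | P i) F i))%E.
Proof.
move=> h; apply: (big_ind (fun x => (c <= ord x)%E)) => //.
- by rewrite ord0 leey.
- exact: ord_add_ge.
Qed.

Lemma ord_sum_gt (I : Type) (r : seq I) (P : pred I) (F : I -> L) (c : R) :
  (forall i, P i -> (c%:E < ord (F i))%E) -> (c%:E < ord (\sum_(i <- r | P i) F i))%E.
Proof.
move=> h; apply: (big_ind (fun x => (c%:E < ord x)%E)) => //.
- by rewrite ord0 ltry.
- exact: ord_add_gt.
Qed.

Lemma ord_add_eq x y : (ord x < ord y)%E -> ord (x + y) = ord x.
Proof.
move=> hxy; apply/eqP; rewrite eq_le; apply/andP; split; last first.
  by apply: le_trans (VA x y); rewrite le_min lexx ltW.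
have := VA (x + y) (- y); rewrite addrK ordN => h.
rewrite leNgt; apply/negP => hlt.
by move: h; rewrite ge_min leNgt hlt /= leNgt hxy.
Qed.

Lemma ord_mul_ge (a b : R) x y : (a%:E <= ord x)%E -> (b%:E <= ord y)%E -> ((a + b)%:E <= ord (x * y))%E.
Proof. by move=> hx hy; rewrite VM EFinD; apply: leeD. Qed.

Lemma ord_mul_gt (a b : R) x y : (a%:E < ord x)%E -> (b%:E <= ord y)%E -> ((a + b)%:E < ord (x * y))%E.
Proof. by move=> hx hy; rewrite VM EFinD; apply: lte_leD. Qed.

Lemma ordX_ge (c : R) x n : (c%:E <= ord x)%E -> ((c *+ n)%:E <= ord (x ^+ n))%E.
Proof.
move=> hx; elim: n => [|n IH]; first by rewrite mulr0n expr0 ord1.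
by rewrite exprS mulrS; apply: ord_mul_ge.
Qed.

Lemma ord_pX n : ord (p%:R ^+ n) = (n%:R)%:E.
Proof.
elim: n => [|n IH]; first by rewrite expr0 ord1.
by rewrite exprS VM IH Vp -EFinD -natr1 addrC.
Qed.

Lemma ord_nat n : (0 <= ord (n%:R))%E.
Proof.
elim: n => [|n IH]; first by rewrite ord0 leey.
by rewrite -natr1; apply: ord_add_ge => //; rewrite ord1.
Qed.

Lemma ord_int (z : int) : (0 <= ord (z%:~R))%E.
Proof.
case: z => n; first exact: ord_nat.
rewrite NegzE intrN ordN; exact: ord_nat.
Qed.

Hypothesis pr : prime p.

Lemma nat_neq0 n : (0 < n)%N -> (n%:R : L) != 0.
Proof.
elim/ltn_ind: n => n IH n0; apply/eqP => hn.
have p0 : (p%:R : L) != 0 by apply/eqP => h; move: Vp; rewrite h ord0.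
case: (boolP (p %| n)%N) => [/dvdnP [m hm]|ndv].
  subst n; move: hn; rewrite natrM => /eqP; rewrite mulf_eq0 (negbTE p0) orbF.
  move: n0; rewrite muln_gt0 => /andP[m0 _].
  by apply/negP; apply: IH => //; apply: ltn_Pmulr => //; apply: prime_gt1.
have cop : coprime p n by rewrite prime_coprime.
have [a _ /dvdnP [b hb]] := Bezoutl n (prime_gt0 pr).
move: hb; rewrite (eqP cop) => hb.
have : (1 : L) = b%:R * p%:R by rewrite -natrM -hb natrD natrM hn mulr0 addr0.
move=> /(congr1 ord); rewrite ord1 VM Vp => h.
have := ord_nat b; case hb': (ord b%:R) => [r| |] //; rewrite hb' in h.
  by move: h => [] h; rewrite lee_fin => hr; move: h hr; lra.
by [].
Qed.

Lemma int_neq0 (z : int) : z != 0 -> (z%:~R : L) != 0.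
Proof.
case: z => n hn.
  by apply: nat_neq0; rewrite lt0n; apply: contra hn => /eqP ->.
by rewrite NegzE intrN oppr_eq0; apply: nat_neq0.
Qed.

Definition S (a : nat -> L) (y : L) N := \sum_(m < N) a m * y ^+ m.

Lemma cauchy_sum (T : nat -> nat -> L) N :
  \sum_(m < N) \sum_(i < m.+1) T i (m - i)%N = \sum_(i < N) \sum_(j < N - i) T i j.
Proof.
elim: N => [|N IH]; first by rewrite !big_ord0.
rewrite big_ord_recr /= IH.
transitivity (\sum_(i < N.+1) (\sum_(j < N - i) T i j + T i (N - i)%N)).
  by rewrite big_split /= [X in _ = X + _]big_ord_recr /= subnn big_ord0 addr0.
apply: eq_bigr => i _; rewrite subSn; last by rewrite -ltnS.
by rewrite big_ord_recr.
Qed.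


Lemma natmul_mono {c : R} {m n : nat} : 0 <= c -> (m <= n)%N -> c *+ m <= c *+ n.
Proof. by move=> c0 mn; rewrite -[c *+ m]mulr_natr -[c *+ n]mulr_natr; apply: ler_wpM2l => //; rewrite ler_nat. Qed.

Lemma prod_partial a b y (Ca Cb c : R) N :
  (forall m, (Ca%:E <= ord (a m))%E) -> (forall m, (Cb%:E <= ord (b m))%E) ->
  (c%:E <= ord y)%E -> 0 <= c ->
  (((Ca + Cb) + c *+ N)%:E <= ord (S (mul_ser a b) y N - S a y N * S b y N))%E.
Proof.
move=> ha hb hy c0.
pose T i j := a i * b j * y ^+ (i + j).
have E1 : S (mul_ser a b) y N = \sum_(i < N) \sum_(j < N - i) T i j.
  rewrite -cauchy_sum /S /mul_ser; apply: eq_bigr => m _; rewrite mulr_suml.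
  by apply: eq_bigr => i _; rewrite /T subnKC // -ltnS.
have E2 : S a y N * S b y N = \sum_(i < N) \sum_(j < N) T i j.
  rewrite /S mulr_suml; apply: eq_bigr => i _; rewrite mulr_sumr.
  by apply: eq_bigr => j _; rewrite /T exprD mulrACA.
have E3 : forall i : 'I_N, \sum_(j < N) T i j =
     \sum_(j < N - i) T i j + \sum_(N - i <= j < N) T i j.
  move=> i; rewrite -(big_mkord xpredT (T i)) -(big_mkord xpredT (T i)).
  by rewrite (@big_cat_nat _ _ _ (N - i)) // leq_subr.
rewrite E1 E2 (eq_bigr _ (fun i _ => E3 i)) big_split /= opprD addrA subrr add0r ordN.
apply: ord_sum_ge => i _; rewrite big_nat_cond; apply: ord_sum_ge => j /andP[/andP[hj1 hj2] _].
have hij : (N <= i + j)%N.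
  by rewrite -(leq_add2l i) in hj1; apply: leq_trans hj1; rewrite subnKC // ltnW.
apply: le_trans (_ : ((Ca + Cb) + c *+ (i + j))%:E <= _)%E.
  by rewrite lee_fin lerD2l; apply: natmul_mono.
by apply: ord_mul_ge; [apply: ord_mul_ge|apply: ordX_ge].
Qed.


Lemma exN_lin (A c : R) : 0 < c -> exists n : nat, forall i, (n <= i)%N -> A <= c *+ i.
Proof.
move=> c0; have [n hn] := @exnat R (A / c); exists n => i ni.
apply: (le_trans _ (natmul_mono (ltW c0) ni)); rewrite -mulr_natr.
by rewrite -ler_pdivrMl // mulrC ltW.
Qed.

Lemma div_vanish P b y (c CP Cb w : R) :
  (forall m, (CP%:E <= ord (P m))%E) -> (forall m, (Cb%:E <= ord (b m))%E) ->
  (c%:E <= ord y)%E -> 0 < c ->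
  evals_to ord (mul_ser P b) y 0 ->
  (exists N0, forall N, (N0 <= N)%N -> (ord (S P y N) <= w%:E)%E) ->
  evals_to ord b y 0.
Proof.
move=> hP hb hy c0 ha [N0 hN0] M.
have [Ma hMa] := ha (M + w).
have [Nd hNd] := @exN_lin (M + w - (CP + Cb)) c c0.
exists (maxn (maxn Ma Nd) N0) => i; rewrite !geq_max => /andP[/andP[i1 i2] i3].
have hD := @prod_partial P b y CP Cb c i hP hb hy (ltW c0).
have hX : ((M + w)%:E <= ord (S P y i * S b y i))%E.
  have -> : S P y i * S b y i =
     S (mul_ser P b) y i - (S (mul_ser P b) y i - S P y i * S b y i) by rewrite subKr.
  apply: ord_add_ge; first by have := hMa i i1; rewrite subr0.
  rewrite ordN; apply: (le_trans _ hD); rewrite lee_fin.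
  by have := hNd i i2; lra.
move: hX; rewrite VM subr0; have := hN0 i i3.
case: (ord (S P y i)) => [r| |] //.
case: (ord (S b y i)) => [t| |] //.
  by rewrite -EFinD !lee_fin => h1 h2; lra.
by move=> _ _; rewrite leey.
Qed.


Arguments ord_mul_ge {a b x y}.
Arguments ord_mul_gt {a b x y}.
Arguments ordX_ge {c x} n.

Lemma term_pos (a : nat -> L) y (c : R) j :
  (forall m, (0%:E <= ord (a m))%E) -> (c%:E <= ord y)%E -> 0 < c ->
  (0%:E < ord (a j.+1 * y ^+ j.+1))%E.
Proof.
move=> ha hy c0; apply: (lt_le_trans _ (ord_mul_ge (ha j.+1) (ordX_ge j.+1 hy))).
rewrite add0r lte_fin; apply: (lt_le_trans c0).
by rewrite -[X in X <= _]mulr1n; apply: natmul_mono => //; apply: ltW.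
Qed.

Lemma P0_pos P y (c : R) :
  (forall m, (0%:E <= ord (P m))%E) -> evals_to ord P y 0 ->
  (c%:E <= ord y)%E -> 0 < c -> (0%:E < ord (P 0%N))%E.
Proof.
move=> hP hev hy c0; rewrite lt_neqAle hP andbT; apply/negP => /eqP h0.
have [M hM] := hev 1.
have := hM M.+1 (leqnSn M); rewrite subr0 big_ord_recl /= expr0 mulr1.
rewrite ord_add_eq -?h0 //.
  by rewrite lee_fin ler10.
apply: ord_sum_gt => j _; exact: term_pos hP hy c0.
Qed.

Definition lin (y : L) : nat -> L := fun m => if m == 0%N then - y else if m == 1%N then 1 else 0.

Lemma P1_unit P cc y :
  (forall m, (0%:E <= ord (P m))%E) -> (forall m, (0%:E <= ord (cc m))%E) ->
  lin y = mul_ser P cc -> (0%:E < ord (P 0%N))%E -> ord (P 1%N) = 0%:E.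
Proof.
move=> hP hc hl h0.
have := congr1 (fun f => f 1%N) hl; rewrite /lin /mul_ser /= big_ord_recr /= big_ord1 /=.
move=> e1.
have h1 : (0%:E < ord (P 0%N * cc 1%N))%E.
  by rewrite VM; apply: (lt_le_trans h0); rewrite leeDl.
apply/eqP; rewrite eq_le hP andbT; rewrite leNgt; apply/negP => hlt.
have : (0%:E < ord (1 : L))%E.
  rewrite e1; apply: ord_add_gt => //; rewrite VM; apply: (lt_le_trans hlt).
  by rewrite leeDl.
by rewrite ord1 ltxx.
Qed.


Lemma ord_mono2 x x' (c : R) a b :
  (c%:E <= ord x)%E -> (c%:E <= ord x')%E -> ((c *+ (a + b))%:E <= ord (x ^+ a * x' ^+ b))%E.
Proof. by move=> h h'; rewrite mulrnDr; apply: ord_mul_ge; apply: ordX_ge. Qed.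

Lemma P_other P y y' (c : R) :
  (forall m, (0%:E <= ord (P m))%E) -> evals_to ord P y 0 ->
  ord (P 1%N) = 0%:E -> y' != y ->
  (c%:E <= ord y)%E -> (c%:E <= ord y')%E -> 0 < c ->
  exists w : R, exists N0, forall N, (N0 <= N)%N -> (ord (S P y' N) <= w%:E)%E.
Proof.
move=> hP hev h1 yy hy hy' c0.
have y0 : y' - y != 0 by rewrite subr_eq0.
have [w hw] := ord_fin (y' - y) y0.
exists w.
pose h m := \sum_(i < m) y' ^+ (m.-1 - i) * y ^+ i.
have ED : forall N, S P y' N - S P y N = (y' - y) * \sum_(m < N) P m * h m.
  move=> N; rewrite /S -sumrB mulr_sumr; apply: eq_bigr => m _.
  by rewrite -mulrBr subrXX mulrCA.
have EH : forall n, ord (\sum_(m < n.+2) P m * h m) = 0%:E.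
  move=> n; rewrite big_ord_recl big_ord_recl /= /h big_ord0 mulr0 add0r.
  rewrite big_ord1 /= ?subn0 ?expr0 ?mulr1.
  rewrite ord_add_eq h1 //.
  apply: ord_sum_gt => j _.
  apply: (lt_le_trans _ (ord_mul_ge (hP _) (_ : ((c *+ j.+1)%:E <= _)%E))).
    rewrite add0r lte_fin; apply: (lt_le_trans c0).
    by rewrite -[X in X <= _]mulr1n; apply: natmul_mono => //; apply: ltW.
  apply: ord_sum_ge => i _.
  have -> : j.+1 = ((j.+2.-1 - i) + i)%N by rewrite subnK //= -ltnS.
  exact: ord_mono2.
have [M hM] := hev (w + 1).
exists (maxn M 2) => N; rewrite geq_max => /andP[hN1 hN2].
have -> : S P y' N = (S P y' N - S P y N) + S P y N by rewrite subrK.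
have eD : ord (S P y' N - S P y N) = w%:E.
  rewrite ED VM hw; case: N hN1 hN2 => [|[|n]] // _ _.
  by rewrite EH adde0.
rewrite ord_add_eq eD //.
have := hM N hN1; rewrite subr0 => hM'.
apply: (lt_le_trans _ hM'); rewrite lte_fin; lra.
Qed.


Definition is_wd (a : nat -> L) (N : nat) (v : R) :=
  [/\ forall m, (v%:E <= ord (a m))%E, ord (a N) = v%:E &
      forall m, (m < N)%N -> (v%:E < ord (a m))%E].

Lemma ord_mul_gt' (a b : R) x y : (a%:E <= ord x)%E -> (b%:E < ord y)%E -> ((a + b)%:E < ord (x * y))%E.
Proof. by move=> h1 h2; rewrite mulrC addrC; apply: ord_mul_gt. Qed.

Lemma wd_mul a b Na Nb va vb : is_wd a Na va -> is_wd b Nb vb ->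
  is_wd (mul_ser a b) (Na + Nb) (va + vb).
Proof.
move=> [a1 a2 a3] [b1 b2 b3]; split.
- by move=> m; rewrite /mul_ser; apply: ord_sum_ge => i _; apply: ord_mul_ge.
- have hN : (Na < (Na + Nb).+1)%N by rewrite ltnS leq_addr.
  rewrite /mul_ser (bigD1 (Ordinal hN)) //= addKn.
  rewrite ord_add_eq; first by rewrite VM a2 b2.
  rewrite VM a2 b2 -EFinD; apply: ord_sum_gt => i hi.
  have hi' : (i : nat) != Na by move: hi; apply: contra => /eqP h; apply/eqP/val_inj.
  case: (ltngtP i Na) => h.
  + by apply: ord_mul_gt; [exact: a3|exact: b1].
  + apply: ord_mul_gt'; first exact: a1. apply: b3.
    have := ltn_ord i; lia.
  + by move: hi'; rewrite h eqxx.
- move=> m hm; rewrite /mul_ser; apply: ord_sum_gt => i _.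
  case: (ltnP i Na) => h.
  + by apply: ord_mul_gt; [exact: a3|exact: b1].
  + apply: ord_mul_gt'; first exact: a1. apply: b3.
    have := ltn_ord i; lia.
Qed.

Lemma wd_unique a N N' v v' : is_wd a N v -> is_wd a N' v' -> N = N'.
Proof.
move=> [a1 a2 a3] [b1 b2 b3].
have vv : v = v'.
  apply/eqP; rewrite eq_le -!lee_fin; apply/andP; split.
  - by rewrite -b2 a1.
  - by rewrite -a2 b1.
subst v'; case: (ltngtP N N') => // h.
- by have := b3 _ h; rewrite a2 ltxx.
- by have := a3 _ h; rewrite b2 ltxx.
Qed.


Lemma wd_exists (e : nat) a (C : R) :
  (0 < e)%N -> (forall x, x != 0 -> exists z : int, ord x = (z%:~R / e%:R)%:E) ->
  (forall m, (C%:E <= ord (a m))%E) -> (exists m, a m != 0) ->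
  exists N v, is_wd a N v.
Proof.
move=> e0 he hC [m0 hm0].
have eR : (0 : R) < e%:R by rewrite ltr0n.
have [n0 hn0] := @exnat R (- (C * e%:R)).
pose val (k : nat) : R := ((k%:Z - n0%:Z)%:~R / e%:R).
pose Q k := exists m, a m != 0 /\ ord (a m) = (val k)%:E.
have hz : forall m, a m != 0 -> exists k, Q k /\ ord (a m) = (val k)%:E.
  move=> m hm; have [z hz] := he _ hm.
  have zn : (- (n0%:Z) <= z)%R.
    rewrite -(ler_int R); apply: ltW; rewrite intrN.
    have := hC m; rewrite hz lee_fin ler_pdivlMr // => h.
    apply: (lt_le_trans _ h); rewrite ltrNl //.
  exists (absz (z + n0%:Z)).
  have ez : ((absz (z + n0%:Z)) : int) = z + n0%:Z by apply: gez0_abs; lia.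
  have vz : val (absz (z + n0%:Z)) = z%:~R / e%:R by rewrite /val ez addrK.
  by split; [exists m; split => //|]; rewrite vz.
have exQ : exists k, `[< Q k >] by have [k [hk _]] := hz m0 hm0; exists k; apply/asboolP.
case: (ex_minnP exQ) => kmin /asboolP [m1 [hm1 e1]] hmin.
pose v := val kmin.
have exN : exists m, `[< ord (a m) = v%:E >] by exists m1; apply/asboolP.
case: (ex_minnP exN) => N /asboolP eN hminN.
have hall : forall m, (v%:E <= ord (a m))%E.
  move=> m; case: (eqVneq (a m) 0) => [->|hm]; first by rewrite ord0 leey.
  have [k [hk ek]] := hz m hm; rewrite ek lee_fin /v /val.
  have kk : (kmin <= k)%N by apply: hmin; apply/asboolP.
  apply: ler_wpM2r; first by rewrite invr_ge0 ltW.
  by rewrite ler_int; lia.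
exists N, v; split => // m hm.
rewrite lt_neqAle hall andbT; apply/negP => /eqP h.
have hmN : `[< ord (a m) = v%:E >] by apply/asboolP; move: h => /esym.
by have := hminN m hmN; rewrite leqNgt hm.
Qed.


Lemma E3 (e : nat) (B : set int) (Y : int -> L) (P : int -> nat -> L) :
  (0 < e)%N -> (forall x, x != 0 -> exists z : int, ord x = (z%:~R / e%:R)%:E) ->
  (forall κ, B κ -> exists c : R, 0 < c /\ (c%:E <= ord (Y κ))%E) ->
  (forall κ κ', B κ -> B κ' -> κ != κ' -> Y κ' != Y κ) ->
  (forall κ, B κ -> forall a, in_Lambda ord a ->
       (evals_to ord a (Y κ) 0 <-> exists2 b, in_Lambda ord b & a = mul_ser (P κ) b)) ->
  (forall κ, B κ -> is_wd (P κ) 1 0 /\ evals_to ord (P κ) (Y κ) 0) ->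
  forall j (B' : set int), (B' `<=` B)%classic -> ~ finite_set B' ->
  forall a, in_Lambda ord a -> (exists m, a m != 0) ->
  (forall κ, B' κ -> evals_to ord a (Y κ) 0) ->
  forall N v, is_wd a N v -> (j <= N)%N.
Proof.
move=> e0 he hY hinj hgen hP j; elim: j => [//|j IH] B' sB' hinf a ha [m0 hm0] hev N v wa.
have [κ hκ] : exists κ, B' κ.
  case: (pselect (exists κ, B' κ)) => // hne; exfalso; apply: hinf.
  rewrite (_ : B' = set0) ?finite_set0 //; apply/seteqP; split => x // hx.
  by exfalso; apply: hne; exists x.
have Bκ := sB' _ hκ.
have [b hbL hab] := (hgen κ Bκ a ha).1 (hev κ hκ).
have hbnz : exists m, b m != 0.
  case: (pselect (exists m, b m != 0)) => // hne; exfalso.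
  have hb0 : forall m, b m = 0 by move=> m; apply/eqP; apply/negPn/negP => hm; apply: hne; exists m.
  move: hm0; rewrite hab /mul_ser big1 ?eqxx // => i _; by rewrite hb0 mulr0.
have [Nb [vb wb]] := @wd_exists e b 0 e0 he hbL hbnz.
have [wP evP] := hP κ Bκ.
have wa' : is_wd a (1 + Nb) (0 + vb) by rewrite hab; apply: wd_mul.
rewrite (@wd_unique a _ _ _ _ wa wa') add1n ltnS.
have hbL2 := hbL.
apply: (IH (B' `\ κ)%classic) hbL hbnz _ _ _ wb.
- by move=> x [hx _]; apply: sB'.
- move=> hfin; apply: hinf; apply: (sub_finite_set (B := (B' `\ κ) `|` [set κ])%classic).
    by move=> x hx; case: (eqVneq x κ) => [->|hxk]; [right|left; split => // /= hxe; move: hxk; rewrite hxe eqxx].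
  by rewrite finite_setU; split => //; apply: finite_set1.
- move=> κ' [hκ' hne].
  have Bκ' := sB' _ hκ'.
  have [c1 [c10 hc1]] := hY κ Bκ.
  have [c2 [c20 hc2]] := hY κ' Bκ'.
  have cc0 : 0 < Num.min c1 c2 by rewrite lt_min c10 c20.
  have hcy : ((Num.min c1 c2)%:E <= ord (Y κ))%E by apply: le_trans hc1; rewrite lee_fin ge_min lexx.
  have hcy' : ((Num.min c1 c2)%:E <= ord (Y κ'))%E by apply: le_trans hc2; rewrite lee_fin ge_min lexx orbT.
  have [wa1 _ _] := wP.
  have [_ wP1 _] := wP.
  have yne : Y κ' != Y κ by apply: hinj => //; apply/eqP => h; apply: hne; rewrite h.
  have [w hw] := @P_other (P κ) (Y κ) (Y κ') _ wa1 evP wP1 yne hcy hcy' cc0.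
  apply: (@div_vanish (P κ) b (Y κ') (Num.min c1 c2) 0 0 w) => //.
  by rewrite -hab; apply: hev.
Qed.


Lemma evals_scale a y u : u != 0 -> evals_to ord a y 0 -> evals_to ord (fun m => u * a m) y 0.
Proof.
move=> u0 hev M'; have [r hr] := ord_fin u u0.
have [N hN] := hev (M' - r); exists N => i hi; have := hN i hi.
have -> : \sum_(m < i) u * a m * y ^+ m = u * \sum_(m < i) a m * y ^+ m.
  by rewrite mulr_sumr; apply: eq_bigr => m _; rewrite mulrA.
rewrite !subr0 VM hr.
case: (ord (\sum_(m < i) a m * y ^+ m)) => [t| |] //.
- by rewrite -EFinD !lee_fin => h; lra.
- by move=> _ /=; rewrite leey.
Qed.

Lemma tens_bnd (C t : R) x : (C%:E <= x + t%:E)%E -> ((C - t)%:E <= x)%E.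
Proof.
case: x => [r| |] h; last by [].
- by move: h; rewrite -EFinD !lee_fin; lra.
- by rewrite leey.
Qed.

Lemma scale_Lambda (C : R) (M : nat) f :
  (forall m, (C%:E <= ord (f m))%E) -> - C < M%:R ->
  in_Lambda ord (fun m => p%:R ^+ M * f m).
Proof.
move=> hf hM m; rewrite VM ord_pX.
apply: (le_trans _ (leeD (lexx (M%:R)%:E) (hf m))).
by rewrite -EFinD lee_fin; lra.
Qed.

Lemma delta_Lambda : in_Lambda ord (fun m => (m == 0%N)%:R).
Proof. by move=> m; case: (m == 0%N) => /=; rewrite ?ord1 ?ord0 ?leey. Qed.

Lemma mul_delta (P : nat -> L) : mul_ser P (fun m => (m == 0%N)%:R) = P.
Proof.
apply/funext => m; rewrite /mul_ser big_ord_recr /= subnn eqxx mulr1 big1 ?add0r //.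
move=> i _; rewrite subn_eq0 leqNgt ltn_ord /= mulr0 //.
Qed.

Lemma lin_Lambda y (c : R) : 0 < c -> (c%:E <= ord y)%E -> in_Lambda ord (lin y).
Proof.
move=> c0 hy m; rewrite /lin; case: (m == 0%N).
  by rewrite ordN; apply: le_trans hy; rewrite lee_fin ltW.
by case: (m == 1%N); rewrite ?ord1 ?ord0 ?leey.
Qed.

Lemma lin_evals y : evals_to ord (lin y) y 0.
Proof.
move=> M; exists 2%N => i hi.
have -> : \sum_(m < i) lin y m * y ^+ m = 0.
  case: i hi => [|[|i]] // _.
  rewrite big_ord_recl big_ord_recl big1 /=.
    by rewrite /lin /= expr0 expr1 mulr1 mul1r addr0 addNr.
  by move=> j _; rewrite /lin /= mul0r.
by rewrite subr0 ord0 leey.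
Qed.


Lemma main_sec (e k : nat) (e0 : L) (h : R) (Delta : finType) (B : set int) (P : int -> nat -> L) :
  (0 < e)%N -> (forall x, x != 0 -> exists z : int, ord x = (z%:~R / e%:R)%:E) ->
  e0 != 0 ->
  ~ finite_set B ->
  (forall kappa, B kappa -> (ord e0 < ord ((kappa - k%:Z)%:~R))%E) ->
  (forall kappa, B kappa -> gen_ker_pi ord k e0 kappa (P kappa)) ->
  forall F : tens_elt L Delta,
    in_tens ord p h F ->
    (forall kappa, B kappa ->
       exists2 G : tens_elt L Delta, in_tens ord p h G & F = mulY (P kappa) G) ->
    F = (fun _ _ _ => 0).
Proof.
move=> epos he e0nz hinf hB hgenK F hF hdiv.
pose Y κ := y_of k e0 κ.
have [r hr] := ord_fin e0 e0nz.
have [s hs] := ord_fin e0^-1 (invr_neq0 e0nz).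
have rs : s = - r.
  have := VM e0 e0^-1; rewrite mulfV // ord1 hr hs -EFinD => -[] h0; lra.
have hY : forall κ, B κ -> exists c : R, 0 < c /\ (c%:E <= ord (Y κ))%E.
  move=> κ Bκ; have := hB κ Bκ; rewrite /Y /y_of VM hs rs hr.
  case: (ord ((κ - k%:Z)%:~R)) => [t| |] // ht.
  - by exists (t - r); split; [move: ht; rewrite lte_fin; lra|rewrite -EFinD].
  - by exists 1; split => //=; rewrite leey.
have hinj : forall κ κ', B κ -> B κ' -> κ != κ' -> Y κ' != Y κ.
  move=> κ κ' _ _ hne; apply/eqP => heq.
  have : ((κ' - k%:Z)%:~R : L) = (κ - k%:Z)%:~R.
    by rewrite -(divfK e0nz ((κ' - k%:Z)%:~R)) -(divfK e0nz ((κ - k%:Z)%:~R)); congr (_ * _).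
  move=> /eqP; rewrite -subr_eq0 -intrB opprB addrA subrK => /eqP h0.
  have : (κ' - κ) != 0 by rewrite subr_eq0 eq_sym.
  by move/int_neq0; rewrite h0 eqxx.
have hgen : forall κ, B κ -> forall a, in_Lambda ord a ->
       (evals_to ord a (Y κ) 0 <-> exists2 b, in_Lambda ord b & a = mul_ser (P κ) b).
  by move=> κ Bκ; have [_ hg] := hgenK κ Bκ.
have hP : forall κ, B κ -> is_wd (P κ) 1 0 /\ evals_to ord (P κ) (Y κ) 0.
  move=> κ Bκ; have [hPL _] := hgenK κ Bκ.
  have evP : evals_to ord (P κ) (Y κ) 0.
    apply/(hgen κ Bκ _ hPL); exists (fun m => (m == 0%N)%:R); first exact: delta_Lambda.
    by rewrite mul_delta.
  have [c [c0 hc]] := hY κ Bκ.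
  have h0 := @P0_pos _ _ _ hPL evP hc c0.
  have [cc hcc hl] := (hgen κ Bκ _ (@lin_Lambda _ _ c0 hc)).1 (lin_evals (Y κ)).
  have h1 := @P1_unit _ _ _ hPL hcc hl h0.
  split => //; split => //.
  by move=> m; rewrite ltnS leqn0 => /eqP ->.
apply/funext => d; apply/funext => m0; apply/funext => n.
apply/eqP/negPn/negP => hne; exfalso.
pose f m := F d m n.
have [C hC] := hF.
have hf : forall m, ((C - h * ell R p n)%:E <= ord (f m))%E by move=> m; apply: tens_bnd; apply: hC.
have [M hM] := @exnat R (- (C - h * ell R p n)).
pose a m := p%:R ^+ M * f m.
have ha : in_Lambda ord a := @scale_Lambda _ _ _ hf hM.
have pM0 : forall M, (p%:R ^+ M : L) != 0.
  by move=> M'; apply/eqP => h0; have := ord_pX M'; rewrite h0 ord0.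
have anz : exists m, a m != 0 by exists m0; rewrite mulf_neq0.
have [N [v wa]] := @wd_exists e a 0 epos he ha anz.
have hev : forall κ, B κ -> evals_to ord a (Y κ) 0.
  move=> κ Bκ; have [G [CG hCG] hFG] := hdiv κ Bκ.
  pose g m := G d m n.
  have hg : forall m, ((CG - h * ell R p n)%:E <= ord (g m))%E by move=> m; apply: tens_bnd; apply: hCG.
  have [M2 hM2] := @exnat R (- (CG - h * ell R p n)).
  pose t := (p%:R ^+ (M + M2) : L).
  have hMM : forall (M0 : nat), - (C - h * ell R p n) < M0%:R -> - (C - h * ell R p n) < (M0 + M2)%:R.
    by move=> M0 h0; rewrite natrD; apply: (lt_le_trans h0); rewrite lerDl ler0n.
  have hMM2 : - (CG - h * ell R p n) < (M + M2)%:R.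
    by rewrite natrD; apply: (lt_le_trans hM2); rewrite lerDr ler0n.
  have Ltf : in_Lambda ord (fun m => t * f m) := @scale_Lambda _ _ _ hf (hMM M hM).
  have Ltg : in_Lambda ord (fun m => t * g m) := @scale_Lambda _ _ _ hg hMM2.
  have eq : (fun m => t * f m) = mul_ser (P κ) (fun m => t * g m).
    apply/funext => m; rewrite /f hFG /mulY /mul_ser mulr_sumr.
    by apply: eq_bigr => i _; rewrite mulrCA.
  have evt : evals_to ord (fun m => t * f m) (Y κ) 0.
    by apply/(hgen κ Bκ _ Ltf); exists (fun m => t * g m).
  have -> : a = (fun m => (p%:R ^+ M / t) * (t * f m)).
    by apply/funext => m; rewrite /a mulrA divfK //; apply: pM0.
  by apply: evals_scale => //; rewrite mulf_neq0 ?invr_eq0 ?pM0.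
have := @E3 e B Y P epos he hY hinj hgen hP N.+1 B (fun x hx => hx) hinf a ha anz hev N v wa.
by rewrite ltnn.
Qed.

End Val.

Theorem lemma4p2 (R : realType) (L : fieldType) (ord : L -> \bar R)
  (p k : nat) (e0 : L) (h : R) (Delta : finType)
  (B : set int) (P : int -> nat -> L) :
  prime p -> (5 <= p)%N ->
  finite_ext_Qp ord p ->
  (2 <= k)%N -> ~~ odd k ->
  e0 != 0 ->
  (ord e0 < ((p%:R - 1) / (p%:R - 2) : R)%:E)%E ->
  0 <= h ->
  ~ finite_set B ->
  (forall kappa, B kappa -> (ord e0 < ord ((kappa - k%:Z)%:~R))%E) ->
  (forall kappa, B kappa -> gen_ker_pi ord k e0 kappa (P kappa)) ->
  forall F : tens_elt L Delta,
    in_tens ord p h F ->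
    (forall kappa, B kappa ->
       exists2 G : tens_elt L Delta, in_tens ord p h G & F = mulY (P kappa) G) ->
    F = (fun _ _ _ => 0).
Proof.
move=> pr _ [[V0 VM VA Vp] [[e [epos he]] _ _]] _ _ e0nz _ _ hinf hB hgen.
exact: (@main_sec R L ord p V0 VM VA Vp pr e k e0 h Delta B P epos he e0nz hinf hB hgen).
Qed.
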